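(* Let $d\ge1$, $0<\epsilon<1$, and let $C_1,\ldots,C_n\in\mathbb{R}^{d+1}$ be a Pareto-optimal market for $\textsc{ProductDesign}(d)$. Let $r=\max\{\operatorname{ppu}(C_i): i\in\{1,\ldots,n\}\}$, $E=1/(1-\epsilon)$, $\ell=\lceil\log_E n\rceil$, and for $i\in\{0,\ldots,\ell\}$ let $H_i=\{(p,q_1,\ldots,q_d): p-\sum_{k=1}^d q_k=r(1-\epsilon)^i\}$. Then for every product $P^*=(p^*,q_1^*,\ldots,q_d^* )$ there exists a product $P\in H_i$ for some $i\in\{0,\ldots,\ell\}$ with $\operatorname{profit}(P)\ge(1-\epsilon)\operatorname{profit}(P^* )$.
   Context: A product $P=(p,q_1,\ldots,q_d)$ has price $p$ and qualities $q_k$; $\operatorname{ppu}(P)=p-\sum_k q_k$. Customer $C_i=(p_i,q_{i,1},\ldots,q_{i,d})$ buys $P$ iff $p\le p_i$ and $q_k\ge q_{i,k}$ for all $k$. $\operatorname{profit}(P)=\operatorname{ppu}(P)\cdot|\{i: C_i\text{ buys }P\}|$. Pareto-optimal: no two customers $C_i,C_j$ with $q_{i,k}>q_{j,k}$ for all $k$ and $p_i<p_j$. *)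

(* Defs.v *)
From HB Require Import structures.
From mathcomp Require Import all_boot all_order all_algebra.
From mathcomp Require Import all_classical all_reals all_analysis.
Set Implicit Arguments. Unset Strict Implicit. Unset Printing Implicit Defensive.
Import Order.TTheory GRing.Theory Num.Theory.
Local Open Scope ring_scope.

(* A product / customer is a price p : R together with a quality vector
   q : 'I_d -> R, i.e. a point (p, q_1, ..., q_d) of R^(d+1). *)

Definition ppu {R : realType} {d : nat} (p : R) (q : 'I_d -> R) : R :=
  p - \sum_(k < d) q k.

Definition buys {R : realType} {d : nat} (cp : R) (cq : 'I_d -> R)
  (p : R) (q : 'I_d -> R) : bool :=
  (p <= cp) && [forall k, cq k <= q k].

Definition profit {R : realType} {d n : nat} (cp : 'I_n -> R)
  (cq : 'I_n -> 'I_d -> R) (p : R) (q : 'I_d -> R) : R :=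
  ppu p q * (#|[set i : 'I_n | buys (cp i) (cq i) p q]|)%:R.

Definition pareto_optimal {R : realType} {d n : nat} (cp : 'I_n -> R)
  (cq : 'I_n -> 'I_d -> R) : Prop :=
  forall i j : 'I_n, ~ ((forall k, cq j k < cq i k) /\ cp i < cp j).

(* Main.v *)
Require Import Defs.
From HB Require Import structures.
From mathcomp Require Import all_boot all_order all_algebra.
From mathcomp Require Import all_classical all_reals all_analysis.
Import Order.TTheory GRing.Theory Num.Theory.
Local Open Scope ring_scope.

Lemma keyfact (R : realType) (n : nat) (a : R) : (0 < n)%N -> 0 < a -> a < 1 ->
  let l : int := Num.ceil (ln (n%:R) / ln (a^-1)) in
  0 <= l /\ n%:R * a ^+ `|l|%N <= 1.
Proof.
move=> n0 a0 a1 l.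
have Ea : 1 < a^-1 by rewrite invf_gt1.
have lnE := ln_gt0 Ea.
have lnn : 0 <= ln (n%:R : R) by rewrite ln_ge0 // ler1n.
have l0 : 0 <= l by rewrite /l ceil_ge0 (lt_le_trans _ (divr_ge0 lnn (ltW lnE))) // ltrN10.
split=> //.
have hl : ln (n%:R : R) / ln (a^-1) <= (`|l|%N)%:R.
  by rewrite -[(`|l|%N)%:R]/((Posz `|l|%N)%:~R) gez0_abs //; apply: ceil_ge.
have : ln (n%:R : R) <= ln (a^-1 ^+ `|l|%N).
  rewrite lnXn ?(lt_trans ltr01) //.
  have -> : ln (a^-1) *+ `|l|%N = (`|l|%N)%:R * ln (a^-1) by rewrite mulr_natl.
  by rewrite -ler_pdivrMr.
rewrite ler_ln ?posrE ?ltr0n ?exprn_gt0 ?invr_gt0 //.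
by rewrite exprVn -div1r ler_pdivlMr ?exprn_gt0.
Qed.

Lemma aux (R : comRingType) (p S x : R) : p - (p - S - x) - S = x.
Proof. by rewrite !opprB addrCA [p + _]addrC subrK addrK. Qed.

Theorem lemma4 (R : realType) (d n : nat) (eps : R)
  (cp : 'I_n -> R) (cq : 'I_n -> 'I_d -> R) (r : R) :
  (1 <= d)%N -> (0 < n)%N -> 0 < eps -> eps < 1 ->
  pareto_optimal cp cq ->
  (* r = max { ppu(C_i) : i < n } *)
  (exists i : 'I_n, r = ppu (cp i) (cq i)) ->
  (forall i : 'I_n, ppu (cp i) (cq i) <= r) ->
  let E := (1 - eps)^-1 in
  let l : int := Num.ceil (ln (n%:R) / ln E) in
  forall (pstar : R) (qstar : 'I_d -> R),
  exists i : nat, (i%:Z <= l)%R /\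
    exists (p : R) (q : 'I_d -> R),
      ppu p q = r * (1 - eps) ^+ i /\
      (1 - eps) * profit cp cq pstar qstar <= profit cp cq p q.
Proof.
move=> d1 n0 e0 e1 _ [j rj] rmax E l pstar qstar.
have a0 : 0 < 1 - eps by rewrite subr_gt0.
have a1 : 1 - eps < 1 by rewrite ltrBlDr ltrDl.
have [l0 key] : 0 <= l /\ n%:R * (1 - eps) ^+ `|l|%N <= 1 := @keyfact R n (1 - eps) n0 a0 a1.
set a := 1 - eps in a0 a1 key *.
set ls := `|l|%N in key.
have lsl : l = ls%:Z by rewrite /ls gez0_abs.
rewrite /profit.
set pp := ppu pstar qstar.
set m := #|[set i | buys (cp i) (cq i) pstar qstar]|.
have [hneg|hpos] := leP (pp * m%:R) 0.
  exists 0%N; split; first by [].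
  pose P := 1 + \sum_i `|cp i|.
  exists P, (fun _ => (P - r) / d%:R); split.
    rewrite /ppu sumr_const card_ord -[_ *+ d]mulr_natr divfK; last by rewrite pnatr_eq0 -lt0n.
    by rewrite expr0 mulr1 opprB addrC subrK.
  have -> : #|[set i | buys (cp i) (cq i) P (fun=> (P - r) / d%:R)]| = 0%N.
    apply/eqP; rewrite cards_eq0; apply/eqP/setP => i; rewrite !inE /buys.
    suff : cp i < P by rewrite ltNge => /negbTE ->.
    rewrite /P (bigD1 i) //=.
    have : 0 <= \sum_(k < n | k != i) `|cp k| by apply: sumr_ge0 => k _.
    move=> S0; apply: (le_lt_trans (ler_norm _)).
    rewrite addrCA ltrDl; apply: (lt_le_trans ltr01); by rewrite lerDl.
  by rewrite mulr0; apply: mulr_ge0_le0 => //; exact: ltW.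
have mpos : (0 < m)%N.
  rewrite lt0n; apply/negP => /eqP m0; by rewrite m0 mulr0 ltxx in hpos.
have ppos : 0 < pp by move: hpos; rewrite pmulr_lgt0 // ltr0n.
have [i0] : exists i0, i0 \in [set i | buys (cp i) (cq i) pstar qstar].
  by apply/set0Pn; rewrite -card_gt0.
rewrite inE /buys => /andP[hp /forallP hq].
have ppr : pp <= r.
  apply: le_trans (rmax i0); rewrite /pp /ppu lerB //; exact: ler_sum.
have mn : m%:R <= n%:R :> R by rewrite ler_nat; have := max_card (mem [set i | buys (cp i) (cq i) pstar qstar]); rewrite card_ord.
have r0 : 0 < r by exact: lt_le_trans ppos ppr.
have [hB|hC] := ltP pp (r * a ^+ ls).
  exists 0%N; split; first by [].
  exists (cp j), (cq j); split; first by rewrite -rj expr0 mulr1.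
  have m1 : 1 <= (#|[set i | buys (cp i) (cq i) (cp j) (cq j)]|)%:R :> R.
    rewrite ler1n card_gt0; apply/set0Pn; exists j; rewrite inE /buys lexx /=.
    by apply/forallP => k.
  rewrite -rj.
  have an : 0 <= a ^+ ls by rewrite exprn_ge0 // ltW.
  have h1 : pp * m%:R <= pp * n%:R by rewrite ler_pM2l.
  have h2 : pp * n%:R <= r * a ^+ ls * n%:R by rewrite ler_pM2r ?ltr0n // ltW.
  have h3 : r * a ^+ ls * n%:R <= r by rewrite -mulrA ger_pMr // mulrC.
  have h0 : a * (pp * m%:R) <= pp * m%:R by rewrite ger_pMl // ltW.
  have h4 : r <= r * (#|[set i | buys (cp i) (cq i) (cp j) (cq j)]|)%:R by rewrite ler_peMr // ltW.
  exact: le_trans h0 (le_trans h1 (le_trans h2 (le_trans h3 h4))).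
pose Pr := fun i => r * a ^+ i <= pp.
have [i Pi imin] := find_ex_minn (ex_intro Pr ls hC).
exists i; split; first by rewrite lsl lez_nat; apply: imin.
exists (pstar - (pp - r * a ^+ i)), qstar; split.
  by rewrite /pp /ppu aux.
have ai : a * pp <= r * a ^+ i.
  case: i Pi imin => [|k] Pi imin.
    rewrite expr0 mulr1; apply: le_trans ppr; by rewrite ger_pMl //; apply: ltW.
  have : ~~ Pr k by apply/negP => /imin; rewrite ltnn.
  rewrite /Pr -ltNge exprS mulrCA => h; rewrite ler_pM2l //; exact: ltW.
have Mle : m%:R <= (#|[set x | buys (cp x) (cq x) (pstar - (pp - r * a ^+ i)) qstar]|)%:R :> R.
  rewrite ler_nat /m; apply: subset_leq_card; apply/fintype.subsetP => x; rewrite !inE /buys.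
  case/andP => h1 ->; rewrite andbT; apply: le_trans h1; rewrite lerBlDr lerDl subr_ge0; exact: Pi.
have rai : 0 <= r * a ^+ i by rewrite mulr_ge0 ?exprn_ge0 // ltW.
have := ler_wpM2l rai Mle.
have m0 : 0 <= m%:R :> R by [].
move=> H.
have ppuE : ppu (pstar - (pp - r * a ^+ i)) qstar = r * a ^+ i by rewrite /pp /ppu aux.
rewrite ppuE mulrA; apply: le_trans H; by rewrite ler_wpM2r.
Qed.
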